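(* Let $(T,A,m|_A)$ be a nonsingular open dynamical system with $m(A_\infty)=0$, fix $\alpha\in(0,1)$ and a finite measurable partition $\{B_1,\dots,B_n\}$ of $A$, and let $\hat A$, $\hat C$, $\hat{\mathbf c}$ and $(\hat D_{n,\alpha})$ be as in the context. If $x_1,\dots,x_n$ are positive numbers satisfying $$x_i^{1+\alpha}=\alpha\,\frac{\sum_j\hat C_{ij}x_j+\hat c_i}{\sum_k\hat C_{ki}x_k^{-\alpha}}\qquad(1\le i\le n),$$ and $\lambda_0^*\in\mathbb R$ satisfies $e^{\alpha\lambda_0^*-1}\sum_{i,j}\hat C_{ij}x_jx_i^{-\alpha}=\alpha$, then $\lambda^*=(\lambda_0^*,\lambda_1^*,\dots,\lambda_n^* )$ with $\lambda_i^*:=\log(x_i)-\lambda_0^*$ ($1\le i\le n$) solves $(\hat D_{n,\alpha})$.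
   Context: Let $(X,m)$ be a measure space, $A\subsetneq X$ measurable and $T:A\to X$ measurable such that: $H_0:=T(A)\setminus A$ is measurable; $m(A\cap T^{-1}H_0)>0$; $m(E)>0$ whenever $E\subseteq X$ is measurable with $m(T^{-1}E)>0$; and $T$ is locally finite-to-one (a nonsingular open dynamical system). Preimages are taken in $A$. $A_n=\{x:x,T(x),\dots,T^n(x)\in A\}$, $A_\infty=\bigcap_nA_n$, $H_1=A\setminus A_1$. $\mathbf 1_{A_1}\psi\circ T$ is $\psi\circ T$ on $A_1$ and $0$ elsewhere in $A$. With $\psi_j=\mathbf 1_{B_j}$ define $\mathcal M^*\lambda=\lambda_0\mathbf 1_{A_1}+\sum_{j=1}^n\lambda_j(\mathbf 1_{A_1}\psi_j\circ T-\alpha\psi_j)$ for $\lambda\in\mathbb R^{n+1}$; the reduced domain $\hat A$ is $A$ with the support of every $\mathcal M^*\lambda$ having $\lambda_0=0$ and $\mathcal M^*\lambda\le0$ $m$-a.e. removed (it is a union of partition sets $B_k$). Let $\hat m=m|_{\hat A}$, $\hat C_{kj}=\hat m(B_k\cap T^{-1}B_j)$ and $\hat c_k=\hat m(H_1\cap B_k)$. The problem $(\hat D_{n,\alpha})$ is: maximize over $\lambda\in\mathbb R^{n+1}$ $$\hat Q(\lambda)=\alpha\lambda_0-\int_{\hat A}\exp(\mathcal M^*\lambda-1)\,dm=\alpha\lambda_0-\sum_{j,k}\exp(\lambda_0-1+\lambda_j-\alpha\lambda_k)\hat C_{kj}-\sum_k\exp(-1-\alpha\lambda_k)\hat c_k.$$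 *)

(* Defs.v *)
From HB Require Import structures.
From mathcomp Require Import all_boot all_order all_algebra.
From mathcomp Require Import all_classical all_reals all_analysis.
Set Implicit Arguments. Unset Strict Implicit. Unset Printing Implicit Defensive.
Import Order.TTheory GRing.Theory Num.Theory.
Local Open Scope classical_set_scope.
Local Open Scope ring_scope.

Section OpenSystem.
Context {d : measure_display} {X : measurableType d} {R : realType}.

Definition locally_finite_to_one (A : set X) (T : X -> X) : Prop :=
  forall y : X, finite_set (A `&` T @^-1` [set y]).

Definition nonsingular_open_system (m : {measure set X -> \bar R})
  (A : set X) (T : X -> X) : Prop :=
  measurable A /\ A <> setT /\ measurable_fun A T /\
  measurable (T @` A `\` A) /\
  (0 < m (A `&` T @^-1` (T @` A `\` A)))%E /\
  (forall E : set X, measurable E -> (0 < m (A `&` T @^-1` E))%E ->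
     (0 < m E)%E) /\
  locally_finite_to_one A T.

Definition A_n (A : set X) (T : X -> X) (k : nat) : set X :=
  [set x | forall i : nat, (i <= k)%N -> A (iter i T x)].

Definition A_infty (A : set X) (T : X -> X) : set X :=
  \bigcap_k A_n A T k.

Definition H_1 (A : set X) (T : X -> X) : set X := A `\` A_n A T 1.

(* M^* lambda, evaluated at points of A, with psi_j = 1_{B_j} *)
Definition Mstar (A : set X) (T : X -> X) (n : nat) (B : 'I_n -> set X)
  (alpha : R) (l0 : R) (l : 'I_n -> R) (x : X) : R :=
  l0 * (\1_(A_n A T 1) x : R) +
  \sum_(j < n) l j * ((\1_(A_n A T 1) x : R) * (\1_(B j) (T x) : R)
                      - alpha * (\1_(B j) x : R)).

Definition ae_nonpos_on (m : {measure set X -> \bar R}) (A : set X)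
  (f : X -> R) : Prop :=
  exists N : set X, [/\ measurable N, m N = 0%E &
    forall x, A x -> ~ N x -> f x <= 0].

Definition Ahat (m : {measure set X -> \bar R}) (A : set X) (T : X -> X)
  (n : nat) (B : 'I_n -> set X) (alpha : R) : set X :=
  A `\` [set x | exists l : 'I_n -> R,
           ae_nonpos_on m A (Mstar A T B alpha 0 l) /\
           A x /\ Mstar A T B alpha 0 l x != 0].

End OpenSystem.

(* the objective of (hat D_{n,alpha}), in terms of hat C and hat c *)
Definition Qhat {R : realType} (n : nat) (alpha : R)
  (C : 'I_n -> 'I_n -> R) (c : 'I_n -> R) (l0 : R) (l : 'I_n -> R) : R :=
  alpha * l0
  - \sum_(j < n) \sum_(k < n) expR (l0 - 1 + l j - alpha * l k) * C k j
  - \sum_(k < n) expR (- 1 - alpha * l k) * c k.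

(* Main.v *)
Require Import Defs.
From HB Require Import structures.
From mathcomp Require Import all_boot all_order all_algebra.
From mathcomp Require Import all_classical all_reals all_analysis.
From mathcomp Require Import ring lra.
Import Order.TTheory GRing.Theory Num.Theory.
Local Open Scope classical_set_scope.
Local Open Scope ring_scope.

Lemma key (R : realType) n (a d0 : R) (d : 'I_n -> R) (w : 'I_n -> 'I_n -> R) (v : 'I_n -> R) :
 \sum_(j < n) \sum_(k < n) w k j = a ->
 (forall i, \sum_(k < n) w k i = a * (\sum_(j < n) w i j + v i)) ->
 \sum_(j < n) \sum_(k < n) w k j * (d0 + d j - a * d k) + \sum_(k < n) v k * (- a * d k) = a * d0.
Proof.
move=> Hs Hi.
have E1 : \sum_(j < n) \sum_(k < n) w k j * (d0 + d j - a * d k) =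
  \sum_(j < n) \sum_(k < n) w k j * d0 + \sum_(j < n) (d j * \sum_(k < n) w k j)
  - \sum_(k < n) (a * d k * \sum_(j < n) w k j).
  have -> : \sum_(k < n) (a * d k * \sum_(j < n) w k j) = \sum_(j < n) \sum_(k < n) w k j * (a * d k).
    rewrite exchange_big /=; apply: eq_bigr => k _; rewrite mulr_sumr; apply: eq_bigr => j _; ring.
  rewrite -big_split -sumrB; apply: eq_bigr => j _.
  rewrite mulr_sumr -big_split -sumrB; apply: eq_bigr => k _ /=.
  by rewrite mulrBr mulrDr [w k j * d j]mulrC.
rewrite E1.
have -> : \sum_(j < n) \sum_(k < n) w k j * d0 = a * d0.
  rewrite -Hs mulrC mulr_sumr; apply: eq_bigr => j _; rewrite mulr_sumr.
  by apply: eq_bigr => k _; apply: mulrC.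
under eq_bigr do rewrite Hi.
set S1 := \sum_(j < n) _. set S2 := \sum_(k < n) (a * _ * _). set S4 := \sum_(k < n) (v k * _).
have Z : S1 - S2 + S4 = 0.
  rewrite /S1 /S2 /S4 -sumrB -big_split /=; apply: big1 => i _.
  rewrite mulrDr mulrDr; lra.
lra.
Qed.

Lemma aux5 (R : comRingType) (E p x e S : R) :
  E * p * (x * e * S) = E * x * S * (p * e).
Proof. ring. Qed.

Theorem lemma7 (d : measure_display) (X : measurableType d) (R : realType)
  (m : {measure set X -> \bar R}) (A : set X) (T : X -> X)
  (n : nat) (B : 'I_n -> set X) (alpha : R)
  (C : 'I_n -> 'I_n -> R) (c : 'I_n -> R)
  (x : 'I_n -> R) (lam0 : R) :
  nonsingular_open_system m A T ->
  m (A_infty A T) = 0%E ->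
  0 < alpha < 1 ->
  (forall i, measurable (B i)) ->
  (forall i j, i != j -> B i `&` B j = set0) ->
  \bigcup_i B i = A ->
  (forall k j, m (Ahat m A T B alpha `&` B k `&` T @^-1` B j) = (C k j)%:E) ->
  (forall k, m (Ahat m A T B alpha `&` H_1 A T `&` B k) = (c k)%:E) ->
  (forall i, 0 < x i) ->
  (forall i, x i `^ (1 + alpha) =
     alpha * (\sum_(j < n) C i j * x j + c i)
       / (\sum_(k < n) C k i * x k `^ (- alpha))) ->
  expR (alpha * lam0 - 1) *
    (\sum_(i < n) \sum_(j < n) C i j * x j * x i `^ (- alpha)) = alpha ->
  forall (l0 : R) (l : 'I_n -> R),
    Qhat alpha C c l0 l <= Qhat alpha C c lam0 (fun i => ln (x i) - lam0).
Proof.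
move=> _ _ /andP[a0 a1] _ _ _ HC Hc xpos Hfix Hlam l0 l.
have Cge0 k j : 0 <= C k j.
  by rewrite -lee_fin -HC; exact: measure_ge0.
have cge0 k : 0 <= c k.
  by rewrite -lee_fin -Hc; exact: measure_ge0.
pose q i := ln (x i).
have hx i : expR (q i) = x i by rewrite /q lnK // posrE.
have hpow i r : x i `^ r = expR (r * q i) by rewrite /powR gt_eqF.
pose E := expR (alpha * lam0 - 1).
pose p k := expR (- alpha * q k).
have Hw k j : expR (lam0 - 1 + (q j - lam0) - alpha * (q k - lam0)) = E * x j * p k.
  rewrite -(hx j) /E /p -!expRD; congr expR; lra.
have Hv k : expR (- 1 - alpha * (q k - lam0)) = E * p k.
  rewrite /E /p -!expRD; congr expR; lra.
pose w k j := E * x j * p k * C k j.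
pose v k := E * p k * c k.
have Qs : Qhat alpha C c lam0 (fun i => ln (x i) - lam0) =
   alpha * lam0 - \sum_(j < n) \sum_(k < n) w k j - \sum_(k < n) v k.
  rewrite /Qhat; congr (_ - _ - _).
    by apply: eq_bigr => j _; apply: eq_bigr => k _; rewrite Hw.
  by apply: eq_bigr => k _; rewrite Hv.
pose dd0 := l0 - lam0.
pose dl j := l j - (q j - lam0).
have expb (y y0 K : R) : 0 <= K -> expR y0 * K * (1 + (y - y0)) <= expR y * K.
  move=> K0; rewrite mulrAC ler_wpM2r //.
  have -> : expR y = expR y0 * expR (y - y0) by rewrite -expRD; congr expR; lra.
  by rewrite ler_wpM2l ?expR_ge1Dx // ltW // expR_gt0.
have Hb : Qhat alpha C c l0 l <= alpha * l0
   - \sum_(j < n) \sum_(k < n) w k j * (1 + (dd0 + dl j - alpha * dl k))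
   - \sum_(k < n) v k * (1 + (- alpha * dl k)).
  rewrite /Qhat lerB // ?lerB //; apply: ler_sum => j _; last first.
    rewrite /v -(Hv j).
    have -> : - alpha * dl j = (- 1 - alpha * l j) - (- 1 - alpha * (q j - lam0)) by rewrite /dl; lra.
    exact: expb.
  apply: ler_sum => k _; rewrite /w -(Hw k j).
  have -> : dd0 + dl j - alpha * dl k = (l0 - 1 + l j - alpha * l k)
     - (lam0 - 1 + (q j - lam0) - alpha * (q k - lam0)) by rewrite /dd0 /dl; lra.
  exact: expb.
have Hs : \sum_(j < n) \sum_(k < n) w k j = alpha.
  rewrite -Hlam exchange_big /= mulr_sumr; apply: eq_bigr => k _.
  rewrite mulr_sumr; apply: eq_bigr => j _; by rewrite hpow /w /p [C k j * x j]mulrC -!mulrA [C k j * _]mulrC.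
have Hi i : \sum_(k < n) w k i = alpha * (\sum_(j < n) w i j + v i).
  set S := \sum_(k < n) C k i * p k.
  set N := \sum_(j < n) C i j * x j + c i.
  have h1 : \sum_(k < n) w k i = E * x i * S.
    rewrite /S mulr_sumr; apply: eq_bigr => kk _; by rewrite /w -mulrA [C kk i * _]mulrC.
  have h2 : \sum_(j < n) w i j + v i = E * p i * N.
    rewrite /N mulrDr mulr_sumr; congr (_ + _).
    apply: eq_bigr => jj _; rewrite /w -!mulrA; congr (_ * _); rewrite mulrCA; congr (_ * _); apply: mulrC.
  have HF := Hfix i.
  have eS : \sum_(k < n) C k i * x k `^ (- alpha) = S.
    by apply: eq_bigr => k _; rewrite hpow.
  rewrite eS -/N in HF.
  have S0 : S != 0.
    apply/negP => /eqP S0; move: HF; rewrite S0 invr0 mulr0 => /eqP.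
    by rewrite hpow gt_eqF // expR_gt0.
  have hN : x i `^ (1 + alpha) * S = alpha * N by rewrite HF divfK.
  have e1 : p i * expR (alpha * q i) = 1.
    by rewrite /p -expRD mulNr addNr expR0.
  have e2 : x i `^ (1 + alpha) = x i * expR (alpha * q i).
    by rewrite hpow -(hx i) -expRD; congr expR; lra.
  rewrite h1 h2.
  have -> : alpha * (E * p i * N) = E * p i * (alpha * N) by rewrite mulrCA.
  rewrite -hN e2.
  have -> : E * p i * (x i * expR (alpha * q i) * S) = E * x i * S * (p i * expR (alpha * q i)).
    exact: aux5.
  by rewrite e1 mulr1.
have K := @key R n alpha dd0 dl w v Hs Hi.
rewrite Qs; apply: (le_trans Hb).
have E1 : \sum_(j < n) \sum_(k < n) w k j * (1 + (dd0 + dl j - alpha * dl k)) =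
  \sum_(j < n) \sum_(k < n) w k j + \sum_(j < n) \sum_(k < n) w k j * (dd0 + dl j - alpha * dl k).
  rewrite -big_split; apply: eq_bigr => j _; rewrite -big_split; apply: eq_bigr => k _ /=.
  by rewrite mulrDr mulr1.
have E2 : \sum_(k < n) v k * (1 + (- alpha * dl k)) = \sum_(k < n) v k + \sum_(k < n) v k * (- alpha * dl k).
  by rewrite -big_split; apply: eq_bigr => k _ /=; rewrite mulrDr mulr1.
rewrite E1 E2.
have hd : alpha * dd0 = alpha * l0 - alpha * lam0 by rewrite /dd0 mulrBr.
rewrite hd in K; move: K.
move: (\sum_(j < n) \sum_(k < n) w k j) => A1.
move: (\sum_(j < n) \sum_(k < n) w k j * (dd0 + dl j - alpha * dl k)) => A2.
move: (\sum_(k < n) v k) => B1.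
move: (\sum_(k < n) v k * (- alpha * dl k)) => B2.
move: (alpha * l0) (alpha * lam0) => u1 u2.
clear. move=> K. rewrite -subr_ge0.
have -> : u2 - A1 - B1 - (u1 - (A1 + A2) - (B1 + B2)) = (A2 + B2) - (u1 - u2) by rewrite -K; lra.
by rewrite K subrr.
Qed.
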